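(* If $\lambda>0$ and $\ell>0$ satisfy $\lambda\ell^2<\hat\lambda$, then $\mathcal{E}_\lambda[\gamma_{\rm larc}^{\lambda,\ell,1}]<\mathcal{E}_\lambda[\gamma_{\rm loop}^{\lambda,\ell,1}]$.
   Context: Elliptic functions: for $q\in[0,1)$, $x\in\mathbb{R}$, $\mathrm{F}(x,q)=\int_0^x(1-q^2\sin^2\theta)^{-1/2}\,d\theta$, $\mathrm{E}(x,q)=\int_0^x(1-q^2\sin^2\theta)^{1/2}\,d\theta$, $\mathrm{K}(q)=\mathrm{F}(\pi/2,q)$, $\mathrm{E}(q)=\mathrm{E}(\pi/2,q)$; $\mathrm{am}(\cdot,q)$ is the inverse of $x\mapsto\mathrm{F}(x,q)$, $\mathrm{cn}(x,q)=\cos\mathrm{am}(x,q)$. The function $q\mapsto2\mathrm{E}(q)-\mathrm{K}(q)$ is strictly decreasing on $[0,1)$ with unique zero $q_*\in(0,1)$. On $[1/\sqrt2,1)$ let $f(q)=(4q^4-5q^2+1)\mathrm{K}(q)+(-8q^4+8q^2-1)\mathrm{E}(q)$ and $g(q)=8(2\mathrm{E}(q)-\mathrm{K}(q))^2(2q^2-1)$. $f$ has a unique zero $\hat q\in[1/\sqrt2,1)$; $\hat\lambda:=g(\hat q)\approx0.70107$. $g(1/\sqrt2)=0$, $g$ strictly increasing on $[1/\sqrt2,\hat q]$, strictly decreasing on $[\hat q,q_*]$ with $g(q_* )=0$, strictly increasing on $[q_*,1)$ with $g\to\infty$ at $1$. For $c\in(0,\hat\lambda]$ let $q_2(c)\in[\hat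 q,q_* )$ solve $g(q)=c$; for $c>0$ let $q_3(c)\in(q_*,1)$ solve $g(q)=c$. $\mathcal{E}_\lambda[\gamma]=\int_\gamma k^2\,ds+\lambda L[\gamma]$ ($k$ signed curvature, $s$ arclength, $L$ length). Curves (arclength parametrized on $[0,2\mathrm{K}(q)/\alpha]$): $\gamma_{\rm larc}^{\lambda,\ell,1}(s)=\frac1\alpha\big(2\mathrm{E}(\mathrm{am}(\alpha s-\mathrm{K}(q),q),q)+2\mathrm{E}(q)-\alpha s,\ 2q\,\mathrm{cn}(\alpha s-\mathrm{K}(q),q)\big)$ with $q=q_2(\lambda\ell^2)$, $\alpha=\frac{2}{\ell}(2\mathrm{E}(q)-\mathrm{K}(q))$; $\gamma_{\rm loop}^{\lambda,\ell,1}(s)=\frac1\alpha\big(-2\mathrm{E}(\mathrm{am}(\alpha s-\mathrm{K}(q),q),q)-2\mathrm{E}(q)+\alpha s,\ 2q\,\mathrm{cn}(\alpha s-\mathrm{K}(q),q)\big)$ with $q=q_3(\lambda\ell^2)$, $\alpha=\frac{2}{\ell}(\mathrm{K}(q)-2\mathrm{E}(q))$. *)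

(* Defs.v *)
From Stdlib Require Import Reals Lra ClassicalEpsilon.
From Coquelicot Require Import Coquelicot.
Open Scope R_scope.

Definition ellF (x q : R) : R :=
  RInt (fun t => / sqrt (1 - q ^ 2 * (sin t) ^ 2)) 0 x.
Definition ellE (x q : R) : R :=
  RInt (fun t => sqrt (1 - q ^ 2 * (sin t) ^ 2)) 0 x.
Definition ellK (q : R) : R := ellF (PI / 2) q.
Definition ellEc (q : R) : R := ellE (PI / 2) q.

(* Jacobi amplitude: the inverse of x |-> F(x,q) (a strictly increasing
   bijection of R for q in [0,1)); chosen by Hilbert's epsilon. *)
Definition am (u q : R) : R := epsilon (inhabits 0) (fun x => ellF x q = u).
Definition cn (u q : R) : R := cos (am u q).

Definition qstar : R :=
  epsilon (inhabits 0) (fun q => 0 < q < 1 /\ 2 * ellEc q - ellK q = 0).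

Definition f_aux (q : R) : R :=
  (4 * q ^ 4 - 5 * q ^ 2 + 1) * ellK q + (- 8 * q ^ 4 + 8 * q ^ 2 - 1) * ellEc q.
Definition g_aux (q : R) : R :=
  8 * (2 * ellEc q - ellK q) ^ 2 * (2 * q ^ 2 - 1).

Definition qhat : R :=
  epsilon (inhabits 0) (fun q => / sqrt 2 <= q < 1 /\ f_aux q = 0).
Definition lamhat : R := g_aux qhat.

Definition q2 (c : R) : R :=
  epsilon (inhabits 0) (fun q => qhat <= q < qstar /\ g_aux q = c).
Definition q3 (c : R) : R :=
  epsilon (inhabits 0) (fun q => qstar < q < 1 /\ g_aux q = c).

Definition alpha_larc (lam l : R) : R :=
  2 / l * (2 * ellEc (q2 (lam * l ^ 2)) - ellK (q2 (lam * l ^ 2))).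
Definition gamma_larc (lam l : R) (s : R) : R * R :=
  let q := q2 (lam * l ^ 2) in
  let a := alpha_larc lam l in
  (/ a * (2 * ellE (am (a * s - ellK q) q) q + 2 * ellEc q - a * s),
   / a * (2 * q * cn (a * s - ellK q) q)).
Definition end_larc (lam l : R) : R :=
  2 * ellK (q2 (lam * l ^ 2)) / alpha_larc lam l.

Definition alpha_loop (lam l : R) : R :=
  2 / l * (ellK (q3 (lam * l ^ 2)) - 2 * ellEc (q3 (lam * l ^ 2))).
Definition gamma_loop (lam l : R) (s : R) : R * R :=
  let q := q3 (lam * l ^ 2) in
  let a := alpha_loop lam l in
  (/ a * (- 2 * ellE (am (a * s - ellK q) q) q - 2 * ellEc q + a * s),
   / a * (2 * q * cn (a * s - ellK q) q)).
Definition end_loop (lam l : R) : R :=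
  2 * ellK (q3 (lam * l ^ 2)) / alpha_loop lam l.

Definition speed (g : R -> R * R) (s : R) : R :=
  sqrt ((Derive (fun t => fst (g t)) s) ^ 2 + (Derive (fun t => snd (g t)) s) ^ 2).

Definition curvature (g : R -> R * R) (s : R) : R :=
  let x1 := Derive (fun t => fst (g t)) s in
  let y1 := Derive (fun t => snd (g t)) s in
  let x2 := Derive (Derive (fun t => fst (g t))) s in
  let y2 := Derive (Derive (fun t => snd (g t))) s in
  (x1 * y2 - y1 * x2) / (sqrt (x1 ^ 2 + y1 ^ 2)) ^ 3.

Definition curve_length (g : R -> R * R) (a b : R) : R :=
  RInt (speed g) a b.

Definition energy (lam : R) (g : R -> R * R) (a b : R) : R :=
  RInt (fun s => (curvature g s) ^ 2 * speed g s) a b + lam * curve_length g a b.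

(* Main.v *)
Require Import Defs.
From Stdlib Require Import Reals Lra Psatz Nsatz Ranalysis5 ClassicalEpsilon FunctionalExtensionality.
From Coquelicot Require Import Coquelicot.
Open Scope R_scope.

Definition Dl (q t : R) : R := 1 - q ^ 2 * sin t ^ 2.

Lemma Dl_pos q t : 0 <= q < 1 -> 0 < Dl q t.
Proof.
  intros Hq. unfold Dl. pose proof (SIN_bound t).
  assert (sin t ^ 2 <= 1) by nra. nra.
Qed.

Lemma Dl_ge q t : 0 <= q < 1 -> 1 - q^2 <= Dl q t.
Proof.
  intros Hq. unfold Dl. pose proof (SIN_bound t).
  assert (sin t ^ 2 <= 1) by nra. nra.
Qed.

Lemma Dl_le q t : Dl q t <= 1.
Proof. unfold Dl. nra. Qed.

Lemma sqrtDl_pos q t : 0 <= q < 1 -> 0 < sqrt (Dl q t).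
Proof. intros; apply sqrt_lt_R0, Dl_pos; auto. Qed.

Lemma Fint_cont q t : 0 <= q < 1 ->
  continuous (fun t => / sqrt (1 - q ^ 2 * sin t ^ 2)) t.
Proof.
  intros Hq. pose proof (Dl_pos q t Hq). pose proof (sqrtDl_pos q t Hq).
  unfold Dl in *. apply (ex_derive_continuous (K:=R_AbsRing) (V:=R_NormedModule)).
  auto_derive.
  replace (1 + - (q * (q * 1) * (sin t * (sin t * 1)))) with (1 - q^2*sin t^2) by ring.
  repeat split; lra.
Qed.

Lemma Eint_cont q t : 0 <= q < 1 ->
  continuous (fun t => sqrt (1 - q ^ 2 * sin t ^ 2)) t.
Proof.
  intros Hq. pose proof (Dl_pos q t Hq).
  unfold Dl in *. apply (ex_derive_continuous (K:=R_AbsRing) (V:=R_NormedModule)).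
  auto_derive.
  replace (1 + - (q * (q * 1) * (sin t * (sin t * 1)))) with (1 - q^2*sin t^2) by ring.
  lra.
Qed.
Lemma deriv_incr_strict (f df : R -> R) a b : a < b ->
  (forall x, a <= x <= b -> is_derive f x (df x)) ->
  (forall x, a < x < b -> 0 < df x) -> f a < f b.
Proof.
  intros Hab Hd Hp.
  destruct (MVT_cor2 f df a b Hab) as [c [Hc1 Hc2]].
  { intros c Hc. apply is_derive_Reals. apply Hd. auto. }
  specialize (Hp c Hc2). nra.
Qed.

Lemma deriv_incr (f df : R -> R) a b : a <= b ->
  (forall x, a <= x <= b -> is_derive f x (df x)) ->
  (forall x, a < x < b -> 0 <= df x) -> f a <= f b.
Proof.
  intros Hab Hd Hp. destruct (Rle_lt_or_eq_dec a b Hab) as [H|H]; [|subst; lra].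
  destruct (MVT_cor2 f df a b H) as [c [Hc1 Hc2]].
  { intros c Hc. apply is_derive_Reals. apply Hd. auto. }
  specialize (Hp c Hc2). nra.
Qed.

Lemma deriv_cont (f : R -> R) (df x : R) : is_derive f x df -> continuity_pt f x.
Proof.
  intros H. apply is_derive_Reals in H.
  apply derivable_continuous_pt. exists df. exact H.
Qed.

Lemma ellF_deriv q x : 0 <= q < 1 ->
  is_derive (fun x => ellF x q) x (/ sqrt (Dl q x)).
Proof.
  intros Hq. unfold ellF, Dl.
  apply (is_derive_RInt (fun t => / sqrt (1 - q ^ 2 * sin t ^ 2)) _ 0).
  - apply filter_forall. intros y. apply (RInt_correct (V:=R_CompleteNormedModule)).
    apply (ex_RInt_continuous (V:=R_CompleteNormedModule)). intros; apply Fint_cont; auto.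
  - apply Fint_cont; auto.
Qed.

Lemma ellE_deriv q x : 0 <= q < 1 ->
  is_derive (fun x => ellE x q) x (sqrt (Dl q x)).
Proof.
  intros Hq. unfold ellE, Dl.
  apply (is_derive_RInt (fun t => sqrt (1 - q ^ 2 * sin t ^ 2)) _ 0).
  - apply filter_forall. intros y. apply (RInt_correct (V:=R_CompleteNormedModule)).
    apply (ex_RInt_continuous (V:=R_CompleteNormedModule)). intros; apply Eint_cont; auto.
  - apply Eint_cont; auto.
Qed.

Lemma Derive_ellF q z : 0 <= q < 1 -> Derive (fun x : R => ellF x q) z = / sqrt (Dl q z).
Proof. intros; apply is_derive_unique, ellF_deriv; auto. Qed.

Lemma Derive_ellE q z : 0 <= q < 1 -> Derive (fun x : R => ellE x q) z = sqrt (Dl q z).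
Proof. intros; apply is_derive_unique, ellE_deriv; auto. Qed.

Lemma ellF_0 q : ellF 0 q = 0.
Proof. unfold ellF. apply (RInt_point (V:=R_CompleteNormedModule)). Qed.

Lemma ellF_incr q x y : 0 <= q < 1 -> x < y -> ellF x q < ellF y q.
Proof.
  intros Hq Hxy.
  apply (deriv_incr_strict (fun x => ellF x q) (fun x => / sqrt (Dl q x))); auto.
  - intros; apply ellF_deriv; auto.
  - intros. apply Rinv_0_lt_compat, sqrtDl_pos; auto.
Qed.

Lemma ellF_inj q x y : 0 <= q < 1 -> ellF x q = ellF y q -> x = y.
Proof.
  intros Hq H. destruct (Rtotal_order x y) as [h|[h|h]]; auto.
  - pose proof (ellF_incr q x y Hq h). lra.
  - pose proof (ellF_incr q y x Hq h). lra.
Qed.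

Lemma ellF_ge_id q x : 0 <= q < 1 -> 0 <= x -> x <= ellF x q.
Proof.
  intros Hq Hx.
  assert (H: (fun x => x - ellF x q) x <= (fun x => x - ellF x q) 0 -> x <= ellF x q).
  { simpl. rewrite ellF_0. lra. }
  apply H. clear H.
  apply (deriv_incr (fun x => - (x - ellF x q)) (fun x => - (1 - / sqrt (Dl q x)))) in Hx.
  - simpl in Hx. lra.
  - intros z _. auto_derive; [eexists; apply ellF_deriv; auto|].
    rewrite Derive_ellF; auto. ring.
  - intros w _. pose proof (sqrtDl_pos q w Hq).
    assert (sqrt (Dl q w) <= 1).
    { rewrite <- sqrt_1. apply sqrt_le_1_alt. apply Dl_le. }
    assert (1 <= / sqrt (Dl q w)).
    { rewrite <- Rinv_1. apply Rinv_le_contravar; auto. }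
    lra.
Qed.

Lemma ellF_le_id q x : 0 <= q < 1 -> x <= 0 -> ellF x q <= x.
Proof.
  intros Hq Hx.
  apply (deriv_incr (fun x => - (x - ellF x q)) (fun x => - (1 - / sqrt (Dl q x)))) in Hx.
  - simpl in Hx. rewrite ellF_0 in Hx. lra.
  - intros z _. auto_derive; [eexists; apply ellF_deriv; auto|].
    rewrite Derive_ellF; auto. ring.
  - intros w _. pose proof (sqrtDl_pos q w Hq).
    assert (sqrt (Dl q w) <= 1).
    { rewrite <- sqrt_1. apply sqrt_le_1_alt. apply Dl_le. }
    assert (1 <= / sqrt (Dl q w)).
    { rewrite <- Rinv_1. apply Rinv_le_contravar; auto. }
    lra.
Qed.

Lemma ellF_surj q u : 0 <= q < 1 -> exists x, ellF x q = u.
Proof.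
  intros Hq.
  destruct (IVT_gen (fun x => ellF x q) (- Rabs u) (Rabs u) u) as [x [_ Hx]].
  - intros z. eapply deriv_cont. apply ellF_deriv; auto.
  - pose proof (ellF_ge_id q (Rabs u) Hq (Rabs_pos u)).
    pose proof (ellF_le_id q (- Rabs u) Hq).
    assert (- Rabs u <= 0) by (pose proof (Rabs_pos u); lra).
    specialize (H0 H1).
    pose proof (Rle_abs u). pose proof (Rle_abs (-u)). rewrite Rabs_Ropp in H3.
    split; [apply Rle_trans with (ellF (- Rabs u) q); [apply Rmin_l|lra]
          | apply Rle_trans with (ellF (Rabs u) q); [lra|apply Rmax_r]].
  - exists x; auto.
Qed.

Lemma am_spec q u : 0 <= q < 1 -> ellF (am u q) q = u.
Proof.
  intros Hq. unfold am.
  apply (epsilon_spec (inhabits 0) (fun x => ellF x q = u)).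
  apply ellF_surj; auto.
Qed.

Lemma am_unique q u x : 0 <= q < 1 -> ellF x q = u -> am u q = x.
Proof.
  intros Hq H. apply (ellF_inj q); auto. rewrite am_spec; auto.
Qed.

Lemma am_incr q u v : 0 <= q < 1 -> u < v -> am u q < am v q.
Proof.
  intros Hq Huv. destruct (Rlt_or_le (am u q) (am v q)) as [h|h]; auto.
  destruct (Rle_lt_or_eq_dec _ _ h) as [h'|h'].
  - pose proof (ellF_incr q _ _ Hq h'). rewrite !am_spec in H; auto. lra.
  - assert (ellF (am v q) q = ellF (am u q) q) by (rewrite h'; auto).
    rewrite !am_spec in H; auto. lra.
Qed.

Lemma am_le q u v : 0 <= q < 1 -> u <= v -> am u q <= am v q.
Proof.
  intros Hq H. destruct (Rle_lt_or_eq_dec _ _ H) as [h|h].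
  - left; apply am_incr; auto.
  - subst; lra.
Qed.

Lemma ellF_le_inv q x y : 0 <= q < 1 -> ellF x q <= ellF y q -> x <= y.
Proof.
  intros Hq H. destruct (Rle_or_lt x y) as [h|h]; auto.
  pose proof (ellF_incr q y x Hq h). lra.
Qed.

Lemma am_cont q u : 0 <= q < 1 -> continuity_pt (fun u => am u q) u.
Proof.
  intros Hq.
  apply (continuity_pt_recip_interv (fun x => ellF x q) (fun u => am u q)
           (am (u - 2) q) (am (u + 2) q)).
  - apply am_incr; auto; lra.
  - intros x y _ Hxy _. apply ellF_incr; auto.
  - intros x _ _. unfold comp, id. apply am_spec; auto.
  - intros x H1 H2. rewrite am_spec in H1, H2; auto.
    split; apply am_le; auto.
  - intros a _. eapply deriv_cont. apply ellF_deriv; auto.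
  - rewrite !am_spec; auto. lra.
Qed.

Lemma am_deriv q u : 0 <= q < 1 ->
  is_derive (fun u => am u q) u (sqrt (Dl q (am u q))).
Proof.
  intros Hq. apply is_derive_Reals.
  pose (Prf := fun (a : R) (_ : am (u - 1) q <= a <= am (u + 1) q) =>
     exist (fun l => derivable_pt_lim (fun x => ellF x q) a l) (/ sqrt (Dl q a))
       (proj1 (is_derive_Reals _ _ _) (ellF_deriv q a Hq))).
  assert (Hi : am (u - 1) q <= am u q <= am (u + 1) q).
  { split; apply am_le; auto; lra. }
  pose proof (derivable_pt_lim_recip_interv (fun x => ellF x q) (fun u => am u q)
       (u - 1) (u + 1) u Prf (am_cont q u Hq)) as H.
  assert (H2 : u - 1 < u + 1) by lra.
  assert (H3 : u - 1 < u < u + 1) by lra.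
  specialize (H H2 H3 Hi).
  assert (H4 : forall x, u - 1 <= x <= u + 1 -> comp (fun x => ellF x q) (fun u => am u q) x = id x).
  { intros; unfold comp, id; apply am_spec; auto. }
  specialize (H H4). simpl in H.
  pose proof (sqrtDl_pos q (am u q) Hq).
  replace (sqrt (Dl q (am u q))) with (1 / / sqrt (Dl q (am u q))) by (field; lra).
  apply H. apply Rinv_neq_0_compat. lra.
Qed.

Lemma Derive_am q u : 0 <= q < 1 -> Derive (fun u : R => am u q) u = sqrt (Dl q (am u q)).
Proof. intros; apply is_derive_unique, am_deriv; auto. Qed.

Lemma DeriveR (f : R -> R) (x l : R) : is_derive f x l -> Derive f x = l.
Proof. intros; apply is_derive_unique; auto. Qed.

Lemma deriv_zero_const (f : R -> R) a b :
  (forall x, is_derive f x 0) -> f a = f b.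
Proof.
  intros H.
  assert (forall a b, a <= b -> f a <= f b).
  { intros c d Hcd. apply (deriv_incr f (fun _ => 0)); auto; intros; lra. }
  assert (forall a b, a <= b -> f b <= f a).
  { intros c d Hcd.
    apply (deriv_incr (fun x => - f x) (fun _ => 0)) in Hcd; [lra| |intros; lra].
    intros x _. auto_derive; [eexists; apply H|].
    rewrite (DeriveR (fun y => f y) x 0 (H x)). ring. }
  destruct (Rle_or_lt a b) as [h|h].
  - specialize (H0 a b h); specialize (H1 a b h); lra.
  - specialize (H0 b a (Rlt_le _ _ h)); specialize (H1 b a (Rlt_le _ _ h)); lra.
Qed.

Lemma Dl_opp q x : Dl q (- x) = Dl q x.
Proof. unfold Dl. rewrite sin_neg. ring. Qed.

Lemma ellF_odd q x : 0 <= q < 1 -> ellF (- x) q = - ellF x q.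
Proof.
  intros Hq.
  assert (H: (fun x => ellF (- x) q + ellF x q) x = (fun x => ellF (- x) q + ellF x q) 0).
  { apply (deriv_zero_const (fun x => _ (- x) q + _ x q) x 0). intros z.
    auto_derive; [repeat split; eexists; apply ellF_deriv; auto|].
    rewrite !Derive_ellF; auto. rewrite Dl_opp. ring. }
  simpl in H. rewrite Ropp_0, ellF_0 in H. lra.
Qed.

Lemma ellE_0 q : ellE 0 q = 0.
Proof. unfold ellE. apply (RInt_point (V:=R_CompleteNormedModule)). Qed.

Lemma ellE_odd q x : 0 <= q < 1 -> ellE (- x) q = - ellE x q.
Proof.
  intros Hq.
  assert (H: (fun x => ellE (- x) q + ellE x q) x = (fun x => ellE (- x) q + ellE x q) 0).
  { apply (deriv_zero_const (fun x => _ (- x) q + _ x q) x 0). intros z.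
    auto_derive; [repeat split; eexists; apply ellE_deriv; auto|].
    rewrite !Derive_ellE; auto. rewrite Dl_opp. ring. }
  simpl in H. rewrite Ropp_0, ellE_0 in H. lra.
Qed.

Lemma am_K q : 0 <= q < 1 -> am (ellK q) q = PI / 2.
Proof. intros; apply am_unique; auto. Qed.

Lemma am_mK q : 0 <= q < 1 -> am (- ellK q) q = - (PI / 2).
Proof. intros; apply am_unique; auto. rewrite ellF_odd; auto. Qed.

Definition gam (sg a q : R) (s : R) : R * R :=
  (sg * (/ a * (2 * ellE (am (a * s - ellK q) q) q + 2 * ellEc q - a * s)),
   / a * (2 * q * cn (a * s - ellK q) q)).

Section Curve.
Variables (sg a q : R).
Hypothesis Hq : 0 <= q < 1.
Hypothesis Ha : a <> 0.
Hypothesis Hsg : sg * sg = 1.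

Definition th t := am (a * t - ellK q) q.
Definition X1 t := sg * (2 * (1 - q ^ 2 * sin (th t) ^ 2) - 1).
Definition Y1 t := - 2 * q * sin (th t) * sqrt (1 - q ^ 2 * sin (th t) ^ 2).
Definition X2 t := - 4 * sg * q ^ 2 * a * sin (th t) * cos (th t) * sqrt (1 - q ^ 2 * sin (th t) ^ 2).
Definition Y2 t := - 2 * q * a * cos (th t) * (1 - 2 * q ^ 2 * sin (th t) ^ 2).

Lemma Dl_th_pos t : 0 < 1 - q ^ 2 * sin (th t) ^ 2.
Proof. apply (Dl_pos q (th t) Hq). Qed.

Lemma dX t : is_derive (fun t => fst (gam sg a q t)) t (X1 t).
Proof.
  unfold gam, X1, th; simpl.
  auto_derive.
  - repeat split.
    + eexists; apply ellE_deriv; auto.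
    + eexists; apply am_deriv; auto.
  - rewrite Derive_ellE, Derive_am; auto.
    pose proof (sqrt_sqrt (Dl q (am (a * t - ellK q) q)) (Rlt_le _ _ (Dl_pos _ _ Hq))) as HS.
    unfold Dl in *.
    change (a * t + - ellK q) with (a * t - ellK q).
    set (s := sin _) in *. set (S := sqrt _) in *.
    assert (Hi : a * / a = 1) by (field; auto).
    clear Hi. field [HS]. auto.
Qed.

Ltac prep t :=
  rewrite ?Derive_ellE, ?Derive_am; auto;
  change (a * t + - ellK q) with (a * t - ellK q) in *;
  pose proof (sqrt_sqrt (Dl q (am (a * t - ellK q) q)) (Rlt_le _ _ (Dl_pos _ _ Hq))) as HS;
  pose proof (sqrtDl_pos q (am (a * t - ellK q) q) Hq) as HSp;
  unfold Dl in *;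
  set (s := sin _) in *; set (S := sqrt _) in *.

Lemma dY t : is_derive (fun t => snd (gam sg a q t)) t (Y1 t).
Proof.
  unfold gam, Y1, th, cn; simpl.
  auto_derive.
  - repeat split. eexists; apply am_deriv; auto.
  - prep t. field [HS]. auto.
Qed.

Lemma dX1 t : is_derive X1 t (X2 t).
Proof.
  unfold X1, X2, th.
  auto_derive.
  - repeat split. eexists; apply am_deriv; auto.
  - prep t. field [HS].
Qed.

Lemma dY1 t : is_derive Y1 t (Y2 t).
Proof.
  unfold Y1, Y2, th.
  auto_derive.
  - repeat split.
    + eexists; apply am_deriv; auto.
    + eexists; apply am_deriv; auto.
    + apply (Dl_pos q _ Hq).
  - prep t. field [HS]. lra.
Qed.

Lemma DX t : Derive (fun t => fst (gam sg a q t)) t = X1 t.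
Proof. apply DeriveR, dX. Qed.
Lemma DY t : Derive (fun t => snd (gam sg a q t)) t = Y1 t.
Proof. apply DeriveR, dY. Qed.
Lemma DDX t : Derive (Derive (fun t => fst (gam sg a q t))) t = X2 t.
Proof. rewrite (Derive_ext _ X1); [apply DeriveR, dX1 | apply DX]. Qed.
Lemma DDY t : Derive (Derive (fun t => snd (gam sg a q t))) t = Y2 t.
Proof. rewrite (Derive_ext _ Y1); [apply DeriveR, dY1 | apply DY]. Qed.

Lemma speed_gam t : speed (gam sg a q) t = 1.
Proof.
  unfold speed. rewrite DX, DY. unfold X1, Y1.
  pose proof (sqrt_sqrt (Dl q (th t)) (Rlt_le _ _ (Dl_pos _ _ Hq))) as HS.
  unfold Dl in *. set (s := sin _) in *. set (S := sqrt (1 - _)) in *.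
  match goal with |- sqrt ?e = 1 => replace e with 1 by ring [HS Hsg]; apply sqrt_1 end.
Qed.

Lemma curv_gam t : curvature (gam sg a q) t ^ 2 * speed (gam sg a q) t
   = 4 * q ^ 2 * a ^ 2 * cos (th t) ^ 2.
Proof.
  rewrite speed_gam. unfold curvature. rewrite DX, DY, DDX, DDY.
  unfold X1, Y1, X2, Y2.
  pose proof (sqrt_sqrt (Dl q (th t)) (Rlt_le _ _ (Dl_pos _ _ Hq))) as HS.
  unfold Dl in *. set (s := sin _) in *. set (S := sqrt (1 - _)) in *.
  set (c := cos _).
  replace ((sg * (2 * (1 - q ^ 2 * s ^ 2) - 1)) ^ 2 + (- 2 * q * s * S) ^ 2) with 1
    by ring [HS Hsg].
  rewrite sqrt_1. field_simplify. ring [HS Hsg].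
Qed.

Lemma dG t : is_derive (fun t => 4 * a * ellE (th t) q - 4 * a ^ 2 * (1 - q ^ 2) * t) t
   (4 * q ^ 2 * a ^ 2 * cos (th t) ^ 2).
Proof.
  unfold th. auto_derive.
  - repeat split.
    + eexists; apply ellE_deriv; auto.
    + eexists; apply am_deriv; auto.
  - prep t. pose proof (sin2_cos2 (am (a * t - ellK q) q)) as Hc.
    unfold Rsqr in Hc. fold s in Hc. set (c := cos _) in *.
    assert (Hc' : c * c = 1 - s * s) by lra.
    ring [HS Hc'].
Qed.

Lemma KK_cont t : continuous (fun t => 4 * q ^ 2 * a ^ 2 * cos (th t) ^ 2) t.
Proof.
  apply (ex_derive_continuous (K:=R_AbsRing) (V:=R_NormedModule)).
  unfold th. auto_derive. eexists; apply am_deriv; auto.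
Qed.

Lemma energy_gam lam :
  energy lam (gam sg a q) 0 (2 * ellK q / a)
  = 8 * a * (ellEc q - (1 - q ^ 2) * ellK q) + lam * (2 * ellK q / a).
Proof.
  unfold energy, curve_length.
  rewrite (RInt_ext (fun s => curvature (gam sg a q) s ^ 2 * speed (gam sg a q) s)
              (fun t => 4 * q ^ 2 * a ^ 2 * cos (th t) ^ 2)).
  2: { intros; apply curv_gam. }
  rewrite (RInt_ext (speed (gam sg a q)) (fun _ => 1)).
  2: { intros; apply speed_gam. }
  rewrite RInt_const.
  rewrite (is_RInt_unique _ _ _ _ (is_RInt_derive
     (fun t => 4 * a * ellE (th t) q - 4 * a ^ 2 * (1 - q ^ 2) * t) _ 0 (2 * ellK q / a)
     (fun t _ => dG t) (fun t _ => KK_cont t))).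
  unfold th. 
  replace (a * (2 * ellK q / a) - ellK q) with (ellK q) by (field; auto).
  replace (a * 0 - ellK q) with (- ellK q) by ring.
  rewrite am_K, am_mK, ellE_odd; auto.
  unfold minus, plus, opp, scal; simpl. unfold mult; simpl. unfold ellEc. field. auto.
Qed.
End Curve.

Lemma ball_abs (x y : R) (d : posreal) : ball x d y <-> Rabs (y - x) < d.
Proof. unfold ball; simpl; unfold AbsRing_ball, abs, minus, plus, opp; simpl. tauto. Qed.

Lemma param_deriv (f df : R -> R -> R) q a b (d : posreal) :
  (forall u t, Rabs (u - q) < d -> is_derive (fun u => f u t) u (df u t)) ->
  (forall u, Rabs (u - q) < d -> ex_RInt (fun t => f u t) a b) ->
  (forall t, continuity_2d_pt df q t) ->
  is_derive (fun u => RInt (fun t => f u t) a b) q (RInt (fun t => df q t) a b).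
Proof.
  intros H1 H2 H3.
  evar_last.
  - apply (is_derive_RInt_param f a b q).
    + exists d. intros y Hy t _. eexists. apply H1. apply ball_abs; auto.
    + intros t _. apply (continuity_2d_pt_ext_loc df).
      * exists d. intros u v Hu _. symmetry. apply is_derive_unique. apply H1; auto.
      * apply H3.
    + exists d. intros y Hy. apply H2. apply ball_abs; auto.
  - apply RInt_ext. intros t _. apply is_derive_unique. apply H1.
    rewrite Rminus_eq_0, Rabs_R0. apply cond_pos.
Qed.

Lemma Dl_pos' q t : q ^ 2 < 1 -> 0 < 1 - q ^ 2 * sin t ^ 2.
Proof.
  intros Hq. pose proof (SIN_bound t).
  assert (sin t ^ 2 <= 1) by nra. assert (0 <= q ^ 2) by nra. nra.
Qed.

Lemma c2_D x y : continuity_2d_pt (fun u v => 1 - u ^ 2 * sin v ^ 2) x y.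
Proof.
  apply (continuity_2d_pt_ext (fun u v => 1 - u * u * (sin v * sin v))).
  { intros; ring. }
  apply continuity_2d_pt_minus. apply continuity_2d_pt_const.
  assert (Hs : continuity_2d_pt (fun u v => sin v) x y).
  { apply (continuity_1d_2d_pt_comp sin (fun u v => v)).
    apply continuity_sin. apply continuity_2d_pt_id2. }
  repeat apply continuity_2d_pt_mult; auto; apply continuity_2d_pt_id1.
Qed.

Lemma c2_S x y : x ^ 2 < 1 -> continuity_2d_pt (fun u v => sqrt (1 - u ^ 2 * sin v ^ 2)) x y.
Proof.
  intros Hx. apply (continuity_1d_2d_pt_comp sqrt (fun u v => 1 - u ^ 2 * sin v ^ 2)).
  - apply continuity_pt_sqrt. pose proof (Dl_pos' x y Hx). lra.
  - apply c2_D.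
Qed.

Lemma c2_sin2 x y : continuity_2d_pt (fun u v => sin v ^ 2) x y.
Proof.
  apply (continuity_2d_pt_ext (fun u v => sin v * sin v)). { intros; ring. }
  assert (Hs : continuity_2d_pt (fun u v => sin v) x y).
  { apply (continuity_1d_2d_pt_comp sin (fun u v => v)).
    apply continuity_sin. apply continuity_2d_pt_id2. }
  apply continuity_2d_pt_mult; auto.
Qed.

Definition dKi (u t : R) := u * sin t ^ 2 / sqrt (1 - u ^ 2 * sin t ^ 2) ^ 3.
Definition dEi (u t : R) := - u * sin t ^ 2 / sqrt (1 - u ^ 2 * sin t ^ 2).

Lemma c2_dKi x y : x ^ 2 < 1 -> continuity_2d_pt dKi x y.
Proof.
  intros Hx. unfold dKi, Rdiv.
  pose proof (sqrt_lt_R0 _ (Dl_pos' x y Hx)).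
  apply continuity_2d_pt_mult.
  - apply continuity_2d_pt_mult. apply continuity_2d_pt_id1. apply c2_sin2.
  - apply continuity_2d_pt_inv.
    + apply (continuity_2d_pt_ext (fun u v => sqrt (1 - u ^ 2 * sin v ^ 2) *
        (sqrt (1 - u ^ 2 * sin v ^ 2) * sqrt (1 - u ^ 2 * sin v ^ 2)))). { intros; ring. }
      repeat apply continuity_2d_pt_mult; apply c2_S; auto.
    + apply pow_nonzero. lra.
Qed.

Lemma c2_dEi x y : x ^ 2 < 1 -> continuity_2d_pt dEi x y.
Proof.
  intros Hx. unfold dEi, Rdiv.
  pose proof (sqrt_lt_R0 _ (Dl_pos' x y Hx)).
  apply continuity_2d_pt_mult.
  - apply continuity_2d_pt_mult. apply continuity_2d_pt_opp, continuity_2d_pt_id1. apply c2_sin2.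
  - apply continuity_2d_pt_inv. apply c2_S; auto. lra.
Qed.

Lemma sq_lt1 u q (d : R) : 0 <= q < 1 -> d = (1 - q) / 2 -> Rabs (u - q) < d -> u ^ 2 < 1.
Proof.
  intros Hq Hd Hu. subst. apply Rabs_def2 in Hu. nra.
Qed.

Lemma ex_RInt_K u : u ^ 2 < 1 -> forall a b, ex_RInt (fun t => / sqrt (1 - u ^ 2 * sin t ^ 2)) a b.
Proof.
  intros Hu a b. apply (ex_RInt_continuous (V:=R_CompleteNormedModule)). intros z _.
  pose proof (Dl_pos' u z Hu).
  apply (ex_derive_continuous (K:=R_AbsRing) (V:=R_NormedModule)).
  auto_derive.
  replace (1 + - (u * (u * 1) * (sin z * (sin z * 1)))) with (1 - u^2*sin z^2) by ring.
  pose proof (sqrt_lt_R0 _ H). repeat split; lra.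
Qed.

Lemma ex_RInt_E u : u ^ 2 < 1 -> forall a b, ex_RInt (fun t => sqrt (1 - u ^ 2 * sin t ^ 2)) a b.
Proof.
  intros Hu a b. apply (ex_RInt_continuous (V:=R_CompleteNormedModule)). intros z _.
  pose proof (Dl_pos' u z Hu).
  apply (ex_derive_continuous (K:=R_AbsRing) (V:=R_NormedModule)).
  auto_derive.
  replace (1 + - (u * (u * 1) * (sin z * (sin z * 1)))) with (1 - u^2*sin z^2) by ring.
  lra.
Qed.

Lemma K_deriv_raw q : 0 <= q < 1 ->
  is_derive ellK q (RInt (fun t => dKi q t) 0 (PI / 2)).
Proof.
  intros Hq. unfold ellK, ellF.
  assert (Hd : 0 < (1 - q) / 2) by lra.
  apply (param_deriv (fun u t => / sqrt (1 - u ^ 2 * sin t ^ 2)) dKi q 0 (PI/2) (mkposreal _ Hd)).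
  - intros u t Hu. simpl in Hu. pose proof (sq_lt1 u q _ Hq eq_refl Hu) as Hu2.
    pose proof (Dl_pos' u t Hu2). pose proof (sqrt_lt_R0 _ H).
    unfold dKi. auto_derive.
    + replace (1 + - (u * (u * 1) * (sin t * (sin t * 1)))) with (1 - u^2*sin t^2) by ring.
      repeat split; lra.
    + replace (1 + - (u * (u * 1) * (sin t * (sin t * 1)))) with (1 - u^2*sin t^2) by ring.
      pose proof (sqrt_sqrt _ (Rlt_le _ _ H)) as HS. set (S := sqrt _) in *.
      field [HS]. lra.
  - intros u Hu. simpl in Hu. apply ex_RInt_K. apply (sq_lt1 u q _ Hq eq_refl Hu).
  - intros t. apply c2_dKi. nra.
Qed.

Lemma E_deriv_raw q : 0 <= q < 1 ->
  is_derive ellEc q (RInt (fun t => dEi q t) 0 (PI / 2)).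
Proof.
  intros Hq. unfold ellEc, ellE.
  assert (Hd : 0 < (1 - q) / 2) by lra.
  apply (param_deriv (fun u t => sqrt (1 - u ^ 2 * sin t ^ 2)) dEi q 0 (PI/2) (mkposreal _ Hd)).
  - intros u t Hu. simpl in Hu. pose proof (sq_lt1 u q _ Hq eq_refl Hu) as Hu2.
    pose proof (Dl_pos' u t Hu2). pose proof (sqrt_lt_R0 _ H).
    unfold dEi. auto_derive.
    + replace (1 + - (u * (u * 1) * (sin t * (sin t * 1)))) with (1 - u^2*sin t^2) by ring.
      lra.
    + replace (1 + - (u * (u * 1) * (sin t * (sin t * 1)))) with (1 - u^2*sin t^2) by ring.
      set (S := sqrt _) in *. field. lra.
  - intros u Hu. simpl in Hu. apply ex_RInt_E. apply (sq_lt1 u q _ Hq eq_refl Hu).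
  - intros t. apply c2_dEi. nra.
Qed.

Lemma RInt_lin3 (f g h : R -> R) A B C a b :
  ex_RInt f a b -> ex_RInt g a b -> ex_RInt h a b ->
  RInt (fun t => A * f t + B * g t + C * h t) a b
  = A * RInt f a b + B * RInt g a b + C * RInt h a b.
Proof.
  intros Hf Hg Hh.
  apply is_RInt_unique.
  apply (is_RInt_ext (fun t => plus (plus (scal A (f t)) (scal B (g t))) (scal C (h t)))).
  { intros; reflexivity. }
  apply (is_RInt_plus (V:=R_NormedModule)); [apply (is_RInt_plus (V:=R_NormedModule))|];
    apply (is_RInt_scal (V:=R_NormedModule)); apply (RInt_correct (V:=R_CompleteNormedModule)); auto.
Qed.

Lemma ex_RInt_dKi q : q ^ 2 < 1 -> forall a b, ex_RInt (fun t => dKi q t) a b.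
Proof.
  intros Hu a b. apply (ex_RInt_continuous (V:=R_CompleteNormedModule)). intros z _.
  pose proof (Dl_pos' q z Hu).
  apply (ex_derive_continuous (K:=R_AbsRing) (V:=R_NormedModule)).
  unfold dKi. auto_derive.
  replace (1 + - (q * (q * 1) * (sin z * (sin z * 1)))) with (1 - q^2*sin z^2) by ring.
  pose proof (sqrt_lt_R0 _ H). repeat split; try lra. apply Rgt_not_eq; repeat apply Rmult_lt_0_compat; lra.
Qed.

Definition Kp (q : R) := (ellEc q - (1 - q ^ 2) * ellK q) / (q * (1 - q ^ 2)).
Definition Ep (q : R) := (ellEc q - ellK q) / q.

Lemma E_deriv q : 0 < q < 1 -> is_derive ellEc q (Ep q).
Proof.
  intros Hq. evar_last. apply E_deriv_raw; lra.
  unfold Ep.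
  rewrite (RInt_ext _ (fun t => / q * sqrt (1 - q ^ 2 * sin t ^ 2)
                               + (- / q) * (/ sqrt (1 - q ^ 2 * sin t ^ 2)) + 0 * 0)).
  2: { intros t _. match goal with |- ?x = ?y => change (@eq R x y) end. unfold dEi. assert (Hq2 : q^2 < 1) by nra.
       pose proof (Dl_pos' q t Hq2).
       pose proof (sqrt_lt_R0 _ H) as HSp. pose proof (sqrt_sqrt _ (Rlt_le _ _ H)) as HS.
       set (S := sqrt _) in *.
       assert (Hs2 : sin t ^ 2 = (1 - S * S) / q ^ 2) by (rewrite HS; field; lra).
       rewrite Hs2. field. split; lra. }
  rewrite (RInt_lin3 (fun t => sqrt (1 - q ^ 2 * sin t ^ 2)) (fun t => / sqrt (1 - q ^ 2 * sin t ^ 2)) (fun _ => 0)).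
  - rewrite RInt_const. unfold ellEc, ellK, ellE, ellF. unfold scal; simpl; unfold mult; simpl.
    field. lra.
  - apply ex_RInt_E; nra.
  - apply ex_RInt_K; nra.
  - apply (ex_RInt_const (V:=R_CompleteNormedModule)).
Qed.

Lemma K_deriv q : 0 < q < 1 -> is_derive ellK q (Kp q).
Proof.
  intros Hq. evar_last. apply K_deriv_raw; lra.
  assert (Hq2 : q^2 < 1) by nra.
  pose (J := RInt (fun t => dKi q t) 0 (PI / 2) : R). change (RInt (fun t => dKi q t) 0 (PI / 2)) with J.
  assert (HI : RInt (fun t => (q ^ 2 - 1) * (/ sqrt (1 - q ^ 2 * sin t ^ 2))
                   + 1 * sqrt (1 - q ^ 2 * sin t ^ 2) + (- (q * (1 - q ^ 2))) * dKi q t) 0 (PI/2) = 0).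
  { apply is_RInt_unique.
    evar_last.
    - apply (is_RInt_derive (fun t => q ^ 2 * (sin t * cos t / sqrt (1 - q ^ 2 * sin t ^ 2)))).
      + intros t _. pose proof (Dl_pos' q t Hq2).
        pose proof (sqrt_lt_R0 _ H) as HSp.
        auto_derive.
        * replace (1 + - (q * (q * 1) * (sin t * (sin t * 1)))) with (1 - q^2*sin t^2) by ring.
          repeat split; lra.
        * replace (1 + - (q * (q * 1) * (sin t * (sin t * 1)))) with (1 - q^2*sin t^2) by ring.
          pose proof (sqrt_sqrt _ (Rlt_le _ _ H)) as HS. unfold dKi.
          pose proof (sin2_cos2 t) as Hc. unfold Rsqr in Hc.
          assert (Hc' : cos t * cos t = 1 - sin t * sin t) by lra.
          set (S := sqrt _) in *. field [HS Hc']. lra.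
      + intros t _. pose proof (Dl_pos' q t Hq2).
        apply (ex_derive_continuous (K:=R_AbsRing) (V:=R_NormedModule)).
        unfold dKi. auto_derive.
        replace (1 + - (q * (q * 1) * (sin t * (sin t * 1)))) with (1 - q^2*sin t^2) by ring.
        pose proof (sqrt_lt_R0 _ H). repeat split; try lra. apply Rgt_not_eq; repeat apply Rmult_lt_0_compat; lra.
    - rewrite sin_PI2, cos_PI2, sin_0. unfold minus, plus, opp; simpl.
      match goal with |- ?x = ?y => change (@eq R x y) end. unfold Rdiv. ring. }
  rewrite RInt_lin3 in HI.
  - assert (H : 0 < 1 - q^2) by nra.
    assert (HJ : q * (1 - q ^ 2) * J = ellE (PI / 2) q - (1 - q ^ 2) * ellF (PI / 2) q).
    { change J with (RInt (dKi q) 0 (PI / 2)).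
      match type of HI with ?x = ?y => change (@eq R x y) in HI end. unfold ellE, ellF. lra. }
    match goal with |- ?x = ?y => change (@eq R x y) end.
    unfold Kp, ellEc, ellK. rewrite <- HJ. field. split; nra.
  - apply ex_RInt_K; auto.
  - apply ex_RInt_E; auto.
  - apply ex_RInt_dKi; auto.
Qed.

Lemma sin_lt1 t : 0 < t < PI / 2 -> sin t < 1.
Proof.
  intros Ht. pose proof (cos_gt_0 t ltac:(lra) ltac:(lra)).
  pose proof (sin2_cos2 t). unfold Rsqr in H0. pose proof (SIN_bound t). nra.
Qed.

Lemma sin_le_x x : 0 <= x -> sin x <= x.
Proof.
  intros Hx.
  apply (deriv_incr (fun x => x - sin x) (fun x => 1 - cos x)) in Hx.
  - simpl in Hx. rewrite sin_0 in Hx. lra.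
  - intros z _. auto_derive; auto. ring.
  - intros z _. pose proof (COS_bound z). lra.
Qed.

Lemma PI2_pos : 0 < PI / 2.
Proof. pose proof PI_RGT_0. lra. Qed.

Lemma K_pos q : 0 <= q < 1 -> 0 < ellK q.
Proof.
  intros Hq. unfold ellK, ellF.
  apply RInt_gt_0. apply PI2_pos.
  - intros. apply Rinv_0_lt_compat, sqrt_lt_R0, (Dl_pos q x Hq).
  - intros. apply Fint_cont; auto.
Qed.

Lemma E_pos q : 0 <= q < 1 -> 0 < ellEc q.
Proof.
  intros Hq. unfold ellEc, ellE.
  apply RInt_gt_0. apply PI2_pos.
  - intros. apply sqrt_lt_R0, (Dl_pos q x Hq).
  - intros. apply Eint_cont; auto.
Qed.

Lemma E_le q : 0 <= q < 1 -> ellEc q <= PI / 2.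
Proof.
  intros Hq. unfold ellEc, ellE.
  apply Rle_trans with (RInt (fun _ => 1) 0 (PI/2)).
  - apply RInt_le. pose proof PI2_pos; lra.
    + apply ex_RInt_E. nra.
    + apply (ex_RInt_const (V:=R_CompleteNormedModule)).
    + intros. apply Rle_trans with (sqrt 1); [apply sqrt_le_1_alt; apply (Dl_le q x)|rewrite sqrt_1; lra].
  - rewrite RInt_const. unfold scal; simpl; unfold mult; simpl. lra.
Qed.

Lemma K_mono q1 q2 : 0 <= q1 -> q1 <= q2 -> q2 < 1 -> ellK q1 <= ellK q2.
Proof.
  intros H1 H2 H3. unfold ellK, ellF.
  apply RInt_le. pose proof PI2_pos; lra.
  - apply ex_RInt_K. nra.
  - apply ex_RInt_K. nra.
  - intros t _. assert (Hq1 : 0 <= q1 < 1) by lra. assert (Hq2 : 0 <= q2 < 1) by lra.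
    pose proof (Dl_pos q1 t Hq1). pose proof (Dl_pos q2 t Hq2). unfold Dl in *.
    apply Rinv_le_contravar. apply sqrt_lt_R0; auto.
    apply sqrt_le_1_alt.
    assert (q1 ^ 2 <= q2 ^ 2) by nra. assert (0 <= sin t ^ 2) by nra. nra.
Qed.

Lemma P_pos_small q : 0 <= q -> q ^ 2 <= 1 / 2 -> 0 < 2 * ellEc q - ellK q.
Proof.
  intros H1 H2. assert (Hq : 0 <= q < 1) by nra.
  unfold ellEc, ellK, ellE, ellF.
  assert (E1 : 2 * RInt (fun t => sqrt (1 - q ^ 2 * sin t ^ 2)) 0 (PI / 2)
     - RInt (fun t => / sqrt (1 - q ^ 2 * sin t ^ 2)) 0 (PI / 2)
     = RInt (fun t => 2 * sqrt (1 - q ^ 2 * sin t ^ 2) + (-1) * / sqrt (1 - q ^ 2 * sin t ^ 2) + 0 * 0) 0 (PI / 2)).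
  { rewrite RInt_lin3.
    - rewrite RInt_const. unfold scal; simpl; unfold mult; simpl. ring.
    - apply ex_RInt_E; nra.
    - apply ex_RInt_K; nra.
    - apply (ex_RInt_const (V:=R_CompleteNormedModule)). }
  rewrite E1. apply RInt_gt_0. apply PI2_pos.
  - intros t Ht. pose proof (Dl_pos q t Hq). unfold Dl in *.
    pose proof (sqrt_lt_R0 _ H) as HSp. pose proof (sqrt_sqrt _ (Rlt_le _ _ H)) as HS.
    pose proof (sin_lt1 t Ht). pose proof (sin_gt_0 t ltac:(lra) ltac:(lra)).
    set (S := sqrt _) in *.
    assert (Hpos : 0 < 2 * S * S - 1) by nra.
    assert (Heq : 2 * S + -1 * / S + 0 * 0 = (2 * S * S - 1) / S) by (field; lra).
    rewrite Heq. apply Rdiv_lt_0_compat; lra.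
  - intros t _. pose proof (Dl_pos q t Hq). unfold Dl in *.
    apply (ex_derive_continuous (K:=R_AbsRing) (V:=R_NormedModule)).
    auto_derive.
    replace (1 + - (q * (q * 1) * (sin t * (sin t * 1)))) with (1 - q^2*sin t^2) by ring.
    pose proof (sqrt_lt_R0 _ H). repeat split; lra.
Qed.

Lemma K_lower (e : R) : 0 < e < 1 -> - ln e <= ellK (sqrt (1 - e ^ 2)).
Proof.
  intros He. set (q := sqrt (1 - e ^ 2)).
  assert (Hq2 : q ^ 2 = 1 - e ^ 2).
  { unfold q. rewrite <- Rsqr_pow2. rewrite Rsqr_sqrt; nra. }
  assert (Hq : 0 <= q < 1).
  { split. apply sqrt_pos. assert (0 <= q) by apply sqrt_pos. nra. }
  unfold ellK, ellF.
  apply Rle_trans with (RInt (fun t => / (PI / 2 - t + e)) 0 (PI / 2)).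
  - assert (HI : is_RInt (fun t => / (PI / 2 - t + e)) 0 (PI / 2)
        (minus (- ln (PI / 2 - PI / 2 + e)) (- ln (PI / 2 - 0 + e)))).
    { apply (is_RInt_derive (fun t => - ln (PI / 2 - t + e))).
    + intros t Ht. rewrite Rmin_left in Ht by (pose proof PI2_pos; lra).
      rewrite Rmax_right in Ht by (pose proof PI2_pos; lra).
      auto_derive. lra. field. lra.
    + intros t Ht. rewrite Rmin_left in Ht by (pose proof PI2_pos; lra).
      rewrite Rmax_right in Ht by (pose proof PI2_pos; lra).
      apply (ex_derive_continuous (K:=R_AbsRing) (V:=R_NormedModule)).
      auto_derive. lra. }
    rewrite (is_RInt_unique _ _ _ _ HI).
    unfold minus, plus, opp; simpl. replace (PI / 2 - PI / 2 + e) with e by ring.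
      replace (PI / 2 - 0 + e) with (PI / 2 + e) by ring.
      assert (0 < ln (PI / 2 + e)).
      { rewrite <- ln_1. apply ln_increasing. lra. pose proof PI_RGT_0. pose proof PI_4. 
        pose proof (PI2_1). lra. }
      lra.
  - apply RInt_le. pose proof PI2_pos; lra.
    + apply (ex_RInt_continuous (V:=R_CompleteNormedModule)). intros z Hz.
      rewrite Rmin_left in Hz by (pose proof PI2_pos; lra).
      rewrite Rmax_right in Hz by (pose proof PI2_pos; lra).
      apply (ex_derive_continuous (K:=R_AbsRing) (V:=R_NormedModule)).
      auto_derive. lra.
    + apply ex_RInt_K; nra.
    + intros t Ht. pose proof (Dl_pos q t Hq). unfold Dl in *.
      apply Rinv_le_contravar. apply sqrt_lt_R0; auto.
      pose proof (cos_ge_0 t ltac:(lra) ltac:(lra)).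
      pose proof (sin_le_x (PI / 2 - t) ltac:(lra)). rewrite sin_shift in H1.
      apply Rle_trans with (sqrt ((cos t + e) ^ 2)).
      * apply sqrt_le_1_alt. rewrite Hq2. pose proof (sin2_cos2 t). unfold Rsqr in H2.
        pose proof (SIN_bound t). nra.
      * rewrite sqrt_pow2; lra.
Qed.

Lemma K_big M : exists q, 0 < q < 1 /\ 3 / 4 <= q ^ 2 /\ M <= ellK q.
Proof.
  set (e := Rmin (exp (- M)) (1 / 2)).
  assert (He : 0 < e <= 1 / 2).
  { unfold e. split. apply Rmin_glb_lt. apply exp_pos. lra. apply Rmin_r. }
  exists (sqrt (1 - e ^ 2)).
  assert (Hq2 : sqrt (1 - e ^ 2) ^ 2 = 1 - e ^ 2).
  { rewrite <- Rsqr_pow2. rewrite Rsqr_sqrt; nra. }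
  assert (0 <= sqrt (1 - e ^ 2)) by apply sqrt_pos.
  split; [split|split].
  - apply sqrt_lt_R0. nra.
  - nra.
  - nra.
  - apply Rle_trans with (- ln e). 2: apply K_lower; lra.
    assert (ln e <= - M).
    { rewrite <- (ln_exp (- M)). destruct (Req_dec e (exp (- M))) as [h|h]. rewrite h; lra.
      left. apply ln_increasing. lra. unfold e in *.
      pose proof (Rmin_l (exp (- M)) (1/2)). lra. }
    lra.
Qed.

Definition Pf q := 2 * ellEc q - ellK q.
Definition wf q := 2 * q ^ 2 - 1.
Definition Phi q := Pf q * (Pf q + 2 * ellK q * wf q).
Definition Psi q := Pf q * sqrt (wf q).
Definition Dk k q := Phi q - 2 * k * Psi q.
Definition fp q := q * ((20 * q ^ 2 - 13) * ellK q - 20 * (2 * q ^ 2 - 1) * ellEc q).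

Lemma DK q : 0 < q < 1 -> Derive ellK q = Kp q.
Proof. intros; apply DeriveR, K_deriv; auto. Qed.
Lemma DK' q : 0 < q < 1 -> Derive (fun x => ellK x) q = Kp q.
Proof. intros; apply DeriveR, K_deriv; auto. Qed.
Lemma DE q : 0 < q < 1 -> Derive ellEc q = Ep q.
Proof. intros; apply DeriveR, E_deriv; auto. Qed.
Lemma DE' q : 0 < q < 1 -> Derive (fun x => ellEc x) q = Ep q.
Proof. intros; apply DeriveR, E_deriv; auto. Qed.

Ltac exK := match goal with
  | |- ex_derive (fun x => ellK x) _ => eexists; apply K_deriv; lra
  | |- ex_derive ellK _ => eexists; apply K_deriv; lra
  | |- ex_derive (fun x => ellEc x) _ => eexists; apply E_deriv; lra
  | |- ex_derive ellEc _ => eexists; apply E_deriv; lra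
  end.

Lemma P_deriv q : 0 < q < 1 ->
  is_derive Pf q (((1 - 2 * q ^ 2) * ellEc q - (1 - q ^ 2) * ellK q) / (q * (1 - q ^ 2))).
Proof.
  intros Hq. unfold Pf. auto_derive.
  - repeat split; exK.
  - rewrite ?DK, ?DK', ?DE, ?DE'; auto. unfold Kp, Ep. field. split; nra.
Qed.

Lemma f_deriv q : 0 < q < 1 -> is_derive f_aux q (fp q).
Proof.
  intros Hq. unfold f_aux, fp. auto_derive.
  - repeat split; exK.
  - rewrite ?DK, ?DK', ?DE, ?DE'; auto. unfold Kp, Ep. field. split; nra.
Qed.

Lemma Pf_cont q : 0 < q < 1 -> continuity_pt Pf q.
Proof. intros. eapply deriv_cont. apply P_deriv; auto. Qed.
Lemma f_cont q : 0 < q < 1 -> continuity_pt f_aux q.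
Proof. intros. eapply deriv_cont. apply f_deriv; auto. Qed.
Lemma g_cont q : 0 < q < 1 -> continuity_pt g_aux q.
Proof.
  intros Hq. eapply deriv_cont. unfold g_aux. auto_derive. repeat split; try exK. reflexivity.
Qed.
Lemma Dk_deriv k q : 0 < q < 1 -> 1 / 2 < q ^ 2 ->
  is_derive (Dk k) q (2 * f_aux q / (q * (1 - q ^ 2)) * (ellK q - k / sqrt (wf q))).
Proof.
  intros Hq Hq2. unfold Dk, Phi, Psi, Pf, wf. auto_derive.
  - repeat split; try exK. nra.
  - rewrite ?DK, ?DK', ?DE, ?DE'; auto. unfold Kp, Ep, f_aux.
    assert (Hw : 0 < 2 * q ^ 2 - 1) by nra.
    replace (2 * (q * (q * 1)) + - 1) with (2 * q ^ 2 - 1) by ring.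
    pose proof (sqrt_lt_R0 _ Hw) as HSp. pose proof (sqrt_sqrt _ (Rlt_le _ _ Hw)) as HS.
    set (S := sqrt _) in *.
    field [HS]. repeat split; nra.
Qed.


Lemma deriv_decr_strict (f df : R -> R) a b : a < b ->
  (forall x, a <= x <= b -> is_derive f x (df x)) ->
  (forall x, a < x < b -> df x < 0) -> f b < f a.
Proof.
  intros Hab Hd Hn.
  assert (H : (fun x => - f x) a < (fun x => - f x) b).
  { apply (deriv_incr_strict (fun x => - f x) (fun x => - df x)); auto.
    - intros x Hx. auto_derive. eexists; apply Hd; auto.
      rewrite (DeriveR (fun y => f y) x (df x)); auto. ring.
    - intros x Hx. specialize (Hn x Hx). lra. }
  simpl in H. lra.
Qed.

Lemma P_decr q1 q2 : 0 < q1 -> q1 < q2 -> q2 < 1 -> 1 / 2 <= q1 ^ 2 -> Pf q2 < Pf q1.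
Proof.
  intros H1 H2 H3 H4.
  apply (deriv_decr_strict Pf (fun q => ((1 - 2 * q ^ 2) * ellEc q - (1 - q ^ 2) * ellK q) / (q * (1 - q ^ 2)))); auto.
  - intros x Hx. apply P_deriv. lra.
  - intros x Hx. assert (Hx' : 0 <= x < 1) by lra.
    pose proof (E_pos x Hx'). pose proof (K_pos x Hx').
    assert (0 < x - q1) by lra. assert (0 < x + q1) by lra.
    assert (1 / 2 < x ^ 2) by nra.
    assert (0 < 1 - x ^ 2) by nra.
    assert (0 < (1 - x ^ 2) * ellK x) by (apply Rmult_lt_0_compat; lra).
    assert (0 < (2 * x ^ 2 - 1) * ellEc x) by (apply Rmult_lt_0_compat; lra).
    assert (N : (1 - 2 * x ^ 2) * ellEc x - (1 - x ^ 2) * ellK x < 0) by lra.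
    assert (D : 0 < / (x * (1 - x ^ 2))) by (apply Rinv_0_lt_compat; apply Rmult_lt_0_compat; lra).
    unfold Rdiv. nra.
Qed.

Lemma ql_sq : (/ sqrt 2) ^ 2 = 1 / 2.
Proof.
  rewrite pow_inv. rewrite <- Rsqr_pow2, Rsqr_sqrt by lra. lra.
Qed.

Lemma ql_pos : 0 < / sqrt 2.
Proof. apply Rinv_0_lt_compat, sqrt_lt_R0; lra. Qed.

Lemma ql_lt1 : / sqrt 2 < 1.
Proof. pose proof ql_sq. pose proof ql_pos. nra. Qed.

Lemma P_zero_ex : exists q, 0 < q < 1 /\ 2 * ellEc q - ellK q = 0.
Proof.
  destruct (K_big (PI + 1)) as [q0 [Hq0 [Hq0b Hq0K]]].
  assert (Hp0 : Pf q0 < 0).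
  { unfold Pf. pose proof (E_le q0 ltac:(lra)). lra. }
  pose proof ql_sq. pose proof ql_pos.
  assert (Hl : 0 < Pf (/ sqrt 2)). { unfold Pf; apply P_pos_small; lra. }
  assert (Hlt : / sqrt 2 < q0).
  { destruct (Rlt_or_le (/ sqrt 2) q0) as [h|h]; auto.
    assert (q0 ^ 2 <= (/ sqrt 2) ^ 2) by (apply pow_incr; lra). lra. }
  assert (Hc : forall a, / sqrt 2 <= a <= q0 -> continuity_pt (fun q => - Pf q) a).
  { intros a Ha. apply continuity_pt_opp. apply Pf_cont. lra. }
  destruct (IVT_interv (fun q => - Pf q) (/ sqrt 2) q0 Hc Hlt ltac:(lra) ltac:(lra)) as [z [Hz1 Hz2]].
  exists z. split. lra. unfold Pf in Hz2. lra.
Qed.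

Lemma qstar_spec : 0 < qstar < 1 /\ 2 * ellEc qstar - ellK qstar = 0.
Proof.
  unfold qstar.
  apply (epsilon_spec (inhabits 0) (fun q => 0 < q < 1 /\ 2 * ellEc q - ellK q = 0)).
  apply P_zero_ex.
Qed.

Lemma Pf_qstar : Pf qstar = 0.
Proof. unfold Pf; apply qstar_spec. Qed.

Lemma qstar_sq : 1 / 2 < qstar ^ 2.
Proof.
  destruct qstar_spec as [H1 H2].
  destruct (Rlt_or_le (1/2) (qstar ^ 2)) as [h|h]; auto.
  pose proof (P_pos_small qstar ltac:(lra) h). lra.
Qed.

Lemma P_pos_below q : 0 < q < qstar -> 0 < Pf q.
Proof.
  intros Hq. destruct qstar_spec as [H1 H2].
  destruct (Rlt_or_le (1/2) (q ^ 2)) as [h|h].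
  - rewrite <- Pf_qstar. apply P_decr; lra.
  - unfold Pf; apply P_pos_small; lra.
Qed.

Lemma P_neg_above q : qstar < q < 1 -> Pf q < 0.
Proof.
  intros Hq. destruct qstar_spec as [H1 H2]. pose proof qstar_sq.
  rewrite <- Pf_qstar. apply P_decr; lra.
Qed.

Lemma f_ql : 0 < f_aux (/ sqrt 2).
Proof.
  pose proof ql_sq. pose proof ql_pos.
  assert (Hl : 0 < Pf (/ sqrt 2)). { unfold Pf; apply P_pos_small; lra. }
  unfold f_aux. unfold Pf in Hl.
  replace ((/ sqrt 2) ^ 4) with (((/ sqrt 2) ^ 2) ^ 2) by ring. rewrite H. lra.
Qed.

Lemma f_neg_above q : qstar <= q < 1 -> f_aux q < 0.
Proof.
  intros Hq. destruct qstar_spec as [H1 H2]. pose proof qstar_sq.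
  assert (HP : Pf q <= 0).
  { destruct (Rle_lt_or_eq_dec _ _ (proj1 Hq)) as [h|h].
    - left; apply P_neg_above; lra.
    - subst; rewrite Pf_qstar; lra. }
  unfold Pf in HP. assert (Hq' : 0 <= q < 1) by lra.
  pose proof (E_pos q Hq'). pose proof (K_pos q Hq').
  assert (Hu : 1/2 < q ^ 2).
  { assert (qstar ^ 2 <= q ^ 2) by (apply pow_incr; lra). lra. }
  assert (Hu1 : q ^ 2 < 1).
  { replace (q^2) with (q*q) by ring. apply Rle_lt_trans with (q*1). apply Rmult_le_compat_l; lra. lra. }
  unfold f_aux. replace (q ^ 4) with (q ^ 2 * q ^ 2) by ring.
  set (u := q ^ 2) in *.
  assert (Ha : 4 * (u * u) - 5 * u + 1 < 0) by nra.
  assert (Hb : (4 * (u * u) - 5 * u + 1) * ellK q <= (4 * (u * u) - 5 * u + 1) * (2 * ellEc q))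
    by (apply Rmult_le_compat_neg_l; lra).
  assert (Hc : (1 - 2 * u) * ellEc q < 0) by (apply Rmult_neg_pos; lra).
  lra.
Qed.

Lemma fp_neg q : / sqrt 2 <= q <= qstar -> fp q < 0.
Proof.
  intros Hq. destruct qstar_spec as [H1 H2]. pose proof ql_sq. pose proof ql_pos.
  assert (HP : 0 <= Pf q).
  { destruct (Rle_lt_or_eq_dec _ _ (proj2 Hq)) as [h|h].
    - left; apply P_pos_below; lra.
    - subst; rewrite Pf_qstar; lra. }
  unfold Pf in HP. assert (Hq' : 0 <= q < 1) by lra.
  pose proof (E_pos q Hq') as HE. pose proof (K_pos q Hq') as HK.
  assert (Hu : 1/2 <= q ^ 2).
  { assert ((/ sqrt 2) ^ 2 <= q ^ 2) by (apply pow_incr; lra). lra. }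
  unfold fp. set (u := q ^ 2) in *.
  assert (HX : (20 * u - 13) * ellK q - 20 * (2 * u - 1) * ellEc q < 0).
  { destruct (Rle_or_lt (20 * u - 13) 0) as [h|h].
    - destruct (Rle_lt_or_eq_dec _ _ Hu) as [h'|h'].
      + assert ((20 * u - 13) * ellK q <= 0) by (clear - h HK; nra).
        assert (0 < 20 * (2 * u - 1) * ellEc q) by (clear - h' HE; nra). lra.
      + rewrite <- h'. clear - HK HE. nra.
    - assert ((20 * u - 13) * ellK q <= (20 * u - 13) * (2 * ellEc q))
        by (apply Rmult_le_compat_l; lra).
      clear - HE H3 Hu. nra. }
  clear - HX Hq H0. assert (0 < q) by lra. nra.
Qed.

Lemma f_decr q1 q2 : / sqrt 2 <= q1 -> q1 < q2 -> q2 <= qstar -> f_aux q2 < f_aux q1.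
Proof.
  intros H1 H2 H3. destruct qstar_spec as [Hs1 Hs2]. pose proof ql_pos.
  apply (deriv_decr_strict f_aux fp); auto.
  - intros x Hx. apply f_deriv. lra.
  - intros x Hx. apply fp_neg. lra.
Qed.

Lemma f_zero_ex : exists q, / sqrt 2 <= q < 1 /\ f_aux q = 0.
Proof.
  destruct qstar_spec as [Hs1 Hs2]. pose proof ql_pos. pose proof ql_sq. pose proof qstar_sq.
  assert (Hlt : / sqrt 2 < qstar) by nra.
  assert (Hc : forall a, / sqrt 2 <= a <= qstar -> continuity_pt (fun q => - f_aux q) a).
  { intros a Ha. apply continuity_pt_opp. apply f_cont. lra. }
  pose proof f_ql. pose proof (f_neg_above qstar ltac:(lra)).
  destruct (IVT_interv (fun q => - f_aux q) (/ sqrt 2) qstar Hc Hlt ltac:(lra) ltac:(lra)) as [z [Hz1 Hz2]].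
  exists z. split. lra. lra.
Qed.

Lemma qhat_spec : / sqrt 2 <= qhat < 1 /\ f_aux qhat = 0.
Proof.
  unfold qhat.
  apply (epsilon_spec (inhabits 0) (fun q => / sqrt 2 <= q < 1 /\ f_aux q = 0)).
  apply f_zero_ex.
Qed.

Lemma qhat_lt : qhat < qstar.
Proof.
  destruct qhat_spec as [H1 H2]. destruct (Rlt_or_le qhat qstar) as [h|h]; auto.
  pose proof (f_neg_above qhat ltac:(lra)). lra.
Qed.

Lemma f_neg_after q : qhat < q < 1 -> f_aux q < 0.
Proof.
  intros Hq. destruct qhat_spec as [H1 H2].
  destruct (Rle_or_lt qstar q) as [h|h].
  - apply f_neg_above; lra.
  - rewrite <- H2. apply f_decr; lra.
Qed.

Lemma mul_nn_np a b : 0 <= a -> b <= 0 -> a * b <= 0.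
Proof. intros; nra. Qed.

Lemma g_qstar : g_aux qstar = 0.
Proof. unfold g_aux. destruct qstar_spec as [_ H]. rewrite H. ring. Qed.

Lemma qhat_pos : 0 < qhat.
Proof. destruct qhat_spec as [H _]. pose proof ql_pos. lra. Qed.

Lemma qhat_sq : 0 < lamhat -> 1 / 2 < qhat ^ 2.
Proof.
  intros Hl. unfold lamhat, g_aux in Hl.
  destruct (Rlt_or_le (1/2) (qhat ^ 2)) as [h|h]; auto.
  assert (0 <= (2 * ellEc qhat - ellK qhat) ^ 2) by (apply pow2_ge_0).
  assert (2 * qhat ^ 2 - 1 <= 0) by lra.
  assert (8 * (2 * ellEc qhat - ellK qhat) ^ 2 * (2 * qhat ^ 2 - 1) <= 0).
  { apply mul_nn_np; [|lra]. lra. }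
  lra.
Qed.

Lemma q2_spec c : 0 < c < lamhat -> qhat <= q2 c < qstar /\ g_aux (q2 c) = c.
Proof.
  intros Hc. unfold q2.
  apply (epsilon_spec (inhabits 0) (fun q => qhat <= q < qstar /\ g_aux q = c)).
  pose proof qhat_lt. pose proof qhat_pos. destruct qstar_spec as [Hs _].
  assert (Hco : forall a, qhat <= a <= qstar -> continuity_pt (fun q => c - g_aux q) a).
  { intros a Ha. apply continuity_pt_minus. apply continuity_pt_const. intros x y; auto.
    apply g_cont. lra. }
  assert (H1 : c - g_aux qhat < 0) by (unfold lamhat in Hc; lra).
  assert (H2 : 0 < c - g_aux qstar) by (rewrite g_qstar; lra).
  destruct (IVT_interv (fun q => c - g_aux q) qhat qstar Hco H H1 H2) as [z [Hz1 Hz2]].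
  exists z. destruct (Req_dec z qstar) as [h|h].
  - subst. rewrite g_qstar in Hz2. lra.
  - split; [lra|lra].
Qed.

Lemma lamhat_bound : lamhat <= 8 * PI ^ 2.
Proof.
  unfold lamhat, g_aux. pose proof qhat_lt. pose proof qhat_pos. destruct qstar_spec as [Hs _].
  destruct qhat_spec as [Hq1 _].
  assert (HP : 0 < Pf qhat) by (apply P_pos_below; lra).
  assert (HE : ellEc qhat <= PI / 2) by (apply E_le; lra).
  assert (HK : 0 < ellK qhat) by (apply K_pos; lra).
  unfold Pf in HP.
  assert (Hw : 2 * qhat ^ 2 - 1 <= 1).
  { assert (qhat ^ 2 <= 1). { replace (qhat^2) with (qhat*qhat) by ring.
      apply Rle_trans with (qhat*1). apply Rmult_le_compat_l; lra. lra. } lra. }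
  assert (HPle : 2 * ellEc qhat - ellK qhat <= PI) by lra.
  set (P := 2 * ellEc qhat - ellK qhat) in *. clearbody P.
  assert (HP2 : P ^ 2 <= PI ^ 2).
  { apply pow_incr. lra. }
  destruct (Rle_or_lt (2 * qhat ^ 2 - 1) 0) as [h|h].
  - assert (8 * P ^ 2 * (2 * qhat ^ 2 - 1) <= 0).
    { apply mul_nn_np; [|lra]. assert (0 <= P ^ 2) by apply pow2_ge_0. lra. }
    assert (0 <= PI ^ 2) by apply pow2_ge_0. lra.
  - assert (8 * P ^ 2 * (2 * qhat ^ 2 - 1) <= 8 * P ^ 2 * 1).
    { apply Rmult_le_compat_l; [|lra]. assert (0 <= P ^ 2) by apply pow2_ge_0. lra. }
    lra.
Qed.

Lemma q3_spec c : 0 < c < lamhat -> qstar < q3 c < 1 /\ g_aux (q3 c) = c.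
Proof.
  intros Hc. unfold q3.
  apply (epsilon_spec (inhabits 0) (fun q => qstar < q < 1 /\ g_aux q = c)).
  destruct qstar_spec as [Hs _]. pose proof lamhat_bound. pose proof PI_RGT_0.
  destruct (K_big (5 * PI + 1)) as [q0 [Hq0 [Hq0b Hq0K]]].
  assert (HE : ellEc q0 <= PI / 2) by (apply E_le; lra).
  assert (HP : 2 * ellEc q0 - ellK q0 <= - (4 * PI)) by lra.
  assert (Hq0s : qstar < q0).
  { destruct (Rlt_or_le qstar q0) as [h|h]; auto.
    destruct (Rle_lt_or_eq_dec _ _ h) as [h'|h'].
    - pose proof (P_pos_below q0 ltac:(lra)). unfold Pf in H1. lra.
    - subst. pose proof Pf_qstar. unfold Pf in H1. lra. }
  assert (Hg0 : c < g_aux q0).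
  { unfold g_aux. set (P := 2 * ellEc q0 - ellK q0) in *. clearbody P.
    assert (16 * PI ^ 2 <= P ^ 2).
    { replace (16 * PI ^ 2) with ((4 * PI) ^ 2) by ring.
      replace (P ^ 2) with ((- P) ^ 2) by ring. apply pow_incr. lra. }
    assert (8 * (16 * PI ^ 2) * (1 / 2) <= 8 * P ^ 2 * (2 * q0 ^ 2 - 1)).
    { assert (0 <= PI ^ 2) by apply pow2_ge_0. apply Rmult_le_compat; lra. }
    assert (0 < PI ^ 2) by (apply pow_lt; lra). lra. }
  assert (Hco : forall a, qstar <= a <= q0 -> continuity_pt (fun q => g_aux q - c) a).
  { intros a Ha. apply continuity_pt_minus. apply g_cont. lra.
    apply continuity_pt_const. intros x y; auto. }
  assert (H1 : g_aux qstar - c < 0) by (rewrite g_qstar; lra).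
  assert (H2 : 0 < g_aux q0 - c) by lra.
  destruct (IVT_interv (fun q => g_aux q - c) qstar q0 Hco Hq0s H1 H2) as [z [Hz1 Hz2]].
  exists z. destruct (Req_dec z qstar) as [h|h].
  - subst. rewrite g_qstar in Hz2. lra.
  - split; [lra|lra].
Qed.

Lemma sq_lt a b : 0 <= a -> a < b -> a ^ 2 < b ^ 2.
Proof. intros; nra. Qed.

Lemma main_ineq c : 0 < c < lamhat -> Phi (q2 c) < - Phi (q3 c).
Proof.
  intros Hc.
  destruct (q2_spec c Hc) as [[Ha1 Ha2] Hga].
  destruct (q3_spec c Hc) as [[Hb1 Hb2] Hgb].
  set (qa := q2 c) in *. set (qb := q3 c) in *.
  destruct qstar_spec as [Hs Hs2]. pose proof qstar_sq as Hss.
  pose proof (qhat_sq ltac:(lra)) as Hh. pose proof qhat_pos as Hhp. pose proof qhat_lt as Hhl.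
  set (qs := qstar) in *.
  assert (Hws : 0 < wf qs) by (unfold wf; lra).
  assert (HKs : 0 < ellK qs) by (apply K_pos; lra).
  pose proof (sqrt_lt_R0 _ Hws) as HSs.
  set (k := ellK qs * sqrt (wf qs)).
  assert (Hk : 0 < k) by (apply Rmult_lt_0_compat; lra).
  assert (HD0 : Dk k qs = 0).
  { unfold Dk, Phi, Psi, qs. rewrite Pf_qstar. ring. }
  assert (Hfac : forall x, 0 < x < 1 -> 1 / 2 < x ^ 2 -> qhat < x ->
     2 * f_aux x / (x * (1 - x ^ 2)) < 0).
  { intros x Hx Hx2 Hxh. pose proof (f_neg_after x ltac:(lra)).
    assert (0 < x * (1 - x ^ 2)).
    { apply Rmult_lt_0_compat. lra. assert (x ^ 2 < 1 ^ 2) by (apply sq_lt; lra). lra. }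
    unfold Rdiv. assert (0 < / (x * (1 - x ^ 2))) by (apply Rinv_0_lt_compat; lra).
    clear - H H1. nra. }
  assert (Hsq : forall x, qhat <= x -> 1 / 2 < x ^ 2).
  { intros x Hx. assert (qhat ^ 2 <= x ^ 2) by (apply pow_incr; lra). lra. }
  assert (HA : Dk k qa < Dk k qs).
  { apply (deriv_incr_strict (Dk k) (fun x => 2 * f_aux x / (x * (1 - x ^ 2)) * (ellK x - k / sqrt (wf x)))).
    - lra.
    - intros x Hx. apply Dk_deriv. lra. apply Hsq. lra.
    - intros x Hx. assert (Hx2 := Hsq x ltac:(lra)).
      assert (Hwx : 0 < wf x) by (unfold wf; lra).
      assert (HKx : ellK x <= ellK qs) by (apply K_mono; lra).
      assert (HKx0 : 0 < ellK x) by (apply K_pos; lra).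
      assert (Hsw : sqrt (wf x) < sqrt (wf qs)).
      { apply sqrt_lt_1_alt. split. lra. unfold wf.
        assert (x ^ 2 < qs ^ 2) by (apply sq_lt; lra). lra. }
      pose proof (sqrt_lt_R0 _ Hwx) as HSx.
      assert (Hprod : ellK x * sqrt (wf x) < k).
      { unfold k. apply Rlt_le_trans with (ellK x * sqrt (wf qs)).
        apply Rmult_lt_compat_l; lra. apply Rmult_le_compat_r; lra. }
      assert (Hneg : ellK x - k / sqrt (wf x) < 0).
      { replace (ellK x - k / sqrt (wf x)) with ((ellK x * sqrt (wf x) - k) / sqrt (wf x))
          by (field; lra).
        unfold Rdiv. assert (0 < / sqrt (wf x)) by (apply Rinv_0_lt_compat; lra).
        clear - Hprod H. nra. }
      pose proof (Hfac x ltac:(lra) Hx2 ltac:(lra)).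
      clear - Hneg H. nra. }
  assert (HB : Dk k qb < Dk k qs).
  { apply (deriv_decr_strict (Dk k) (fun x => 2 * f_aux x / (x * (1 - x ^ 2)) * (ellK x - k / sqrt (wf x)))).
    - lra.
    - intros x Hx. apply Dk_deriv. lra. apply Hsq. lra.
    - intros x Hx. assert (Hx2 := Hsq x ltac:(lra)).
      assert (Hwx : 0 < wf x) by (unfold wf; lra).
      assert (HKx : ellK qs <= ellK x) by (apply K_mono; lra).
      assert (Hsw : sqrt (wf qs) < sqrt (wf x)).
      { apply sqrt_lt_1_alt. split. lra. unfold wf.
        assert (qs ^ 2 < x ^ 2) by (apply sq_lt; lra). lra. }
      pose proof (sqrt_lt_R0 _ Hwx) as HSx.
      assert (Hprod : k < ellK x * sqrt (wf x)).
      { unfold k. apply Rlt_le_trans with (ellK qs * sqrt (wf x)).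
        apply Rmult_lt_compat_l; lra. apply Rmult_le_compat_r; lra. }
      assert (Hpos : 0 < ellK x - k / sqrt (wf x)).
      { replace (ellK x - k / sqrt (wf x)) with ((ellK x * sqrt (wf x) - k) / sqrt (wf x))
          by (field; lra).
        unfold Rdiv. assert (0 < / sqrt (wf x)) by (apply Rinv_0_lt_compat; lra).
        clear - Hprod H. nra. }
      pose proof (Hfac x ltac:(lra) Hx2 ltac:(lra)).
      clear - Hpos H. nra. }
  rewrite HD0 in HA, HB. unfold Dk in HA, HB.
  assert (HPa : 0 < Pf qa) by (apply P_pos_below; fold qs; lra).
  assert (HPb : Pf qb < 0) by (apply P_neg_above; fold qs; lra).
  assert (Hwa : 0 < wf qa) by (unfold wf; pose proof (Hsq qa ltac:(lra)); lra).
  assert (Hwb : 0 < wf qb) by (unfold wf; pose proof (Hsq qb ltac:(lra)); lra).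
  assert (HPsa : 0 < Psi qa) by (unfold Psi; apply Rmult_lt_0_compat; [lra| apply sqrt_lt_R0; lra]).
  assert (HPsb : Psi qb < 0).
  { unfold Psi. pose proof (sqrt_lt_R0 _ Hwb). clear - HPb H. nra. }
  assert (Hsq2 : Psi qa ^ 2 = Psi qb ^ 2).
  { unfold Psi. rewrite !Rpow_mult_distr. rewrite <- !Rsqr_pow2 with (x := sqrt _).
    rewrite !Rsqr_sqrt by lra. unfold g_aux, Pf, wf in *. lra. }
  assert (Hrel : Psi qa = - Psi qb).
  { clear - Hsq2 HPsa HPsb. nra. }
  assert (Phi qa < 2 * k * Psi qa) by lra.
  assert (Phi qb < 2 * k * Psi qb) by lra.
  rewrite Hrel in H. lra.
Qed.

Theorem lemma4p6 (lam l : R) (Hlam : 0 < lam) (Hl : 0 < l)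
  (Hsmall : lam * l ^ 2 < lamhat) :
  energy lam (gamma_larc lam l) 0 (end_larc lam l)
  < energy lam (gamma_loop lam l) 0 (end_loop lam l).
Proof.
  assert (Hc : 0 < lam * l ^ 2 < lamhat).
  { split; auto. apply Rmult_lt_0_compat; auto. apply pow_lt; auto. }
  destruct (q2_spec _ Hc) as [[Ha1 Ha2] Hga].
  destruct (q3_spec _ Hc) as [[Hb1 Hb2] Hgb].
  pose proof (main_ineq _ Hc) as Hmain.
  destruct qstar_spec as [Hs _]. pose proof qhat_pos.
  assert (HPa : 0 < Pf (q2 (lam * l ^ 2))) by (apply P_pos_below; lra).
  assert (HPb : Pf (q3 (lam * l ^ 2)) < 0) by (apply P_neg_above; lra).
  assert (E1 : energy lam (gamma_larc lam l) 0 (end_larc lam l) = 8 * Phi (q2 (lam * l ^ 2)) / l).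
  { replace (gamma_larc lam l) with (gam 1 (alpha_larc lam l) (q2 (lam * l ^ 2))).
    2: { apply functional_extensionality; intro s. unfold gamma_larc, gam. simpl.
         f_equal. ring. }
    unfold end_larc.
    rewrite (energy_gam 1 (alpha_larc lam l) (q2 (lam * l ^ 2))).
    - unfold alpha_larc. set (qq := q2 (lam * l ^ 2)) in *.
      replace lam with (g_aux qq / l ^ 2) by (rewrite Hga; field; lra).
      unfold g_aux, Phi, wf. unfold Pf in *. field. split; lra.
    - lra.
    - unfold alpha_larc. unfold Pf in HPa. apply Rgt_not_eq.
      apply Rmult_lt_0_compat. apply Rdiv_lt_0_compat; lra. lra.
    - ring. }
  assert (E2 : energy lam (gamma_loop lam l) 0 (end_loop lam l) = - 8 * Phi (q3 (lam * l ^ 2)) / l).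
  { replace (gamma_loop lam l) with (gam (-1) (alpha_loop lam l) (q3 (lam * l ^ 2))).
    2: { apply functional_extensionality; intro s. unfold gamma_loop, gam. simpl.
         f_equal. ring. }
    unfold end_loop.
    rewrite (energy_gam (-1) (alpha_loop lam l) (q3 (lam * l ^ 2))).
    - unfold alpha_loop. set (qq := q3 (lam * l ^ 2)) in *.
      replace lam with (g_aux qq / l ^ 2) by (rewrite Hgb; field; lra).
      unfold g_aux, Phi, wf. unfold Pf in *. field. split; lra.
    - lra.
    - unfold alpha_loop. unfold Pf in HPb. apply Rgt_not_eq.
      apply Rmult_lt_0_compat. apply Rdiv_lt_0_compat; lra. lra.
    - ring. }
  rewrite E1, E2.
  unfold Rdiv. apply Rmult_lt_compat_r. apply Rinv_0_lt_compat; lra. lra.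
Qed.
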